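(* Let $A$ be a totally unimodular $n\times m$ matrix, let $L(A) := \{v\in\mathbb{Z}^m : Av = 0\}$ and $\lambda := \lambda(L(A))$. Then every nonzero vector $v \in L(A)$ with $\lVert v\rVert_1 < 2\lambda$ is a circuit of $A$.
   Context: A matrix is totally unimodular if every square submatrix has determinant $0$ or $\pm1$. $\lambda(L) := \min\{\lVert v\rVert_1 : 0 \ne v\in L\}$ with $\lVert\cdot\rVert_1$ the $\ell_1$-norm. A vector $u\in L(A)$ is a circuit of $A$ if there is no nonzero $v\in L(A)$ with $\mathrm{supp}(v) \subsetneq \mathrm{supp}(u)$, and $\gcd(u_1,\dots,u_m) = 1$. *)

(* Defs.v *)
From mathcomp Require Import all_boot all_order all_algebra.
Set Implicit Arguments. Unset Strict Implicit. Unset Printing Implicit Defensive.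
Import Order.TTheory GRing.Theory Num.Theory.
Local Open Scope ring_scope.

Definition totally_unimodular (n m : nat) (A : 'M[int]_(n, m)) : Prop :=
  forall (k : nat) (f : 'I_k -> 'I_n) (g : 'I_k -> 'I_m),
    injective f -> injective g ->
    let d := \det (mxsub f g A) in [\/ d = 0, d = 1 | d = -1].

Definition inL (n m : nat) (A : 'M[int]_(n, m)) (v : 'cV[int]_m) : Prop :=
  A *m v = 0.

Definition norm1 (m : nat) (v : 'cV[int]_m) : nat :=
  (\sum_(i < m) `|v i ord0|%N)%N.

Definition supp (m : nat) (v : 'cV[int]_m) : {set 'I_m} :=
  [set i | v i ord0 != 0].

Definition is_lambda (n m : nat) (A : 'M[int]_(n, m)) (l : nat) : Prop :=
  (exists v, v != 0 /\ inL A v /\ norm1 v = l) /\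
  (forall v, v != 0 -> inL A v -> (l <= norm1 v)%N).

Definition circuit (n m : nat) (A : 'M[int]_(n, m)) (u : 'cV[int]_m) : Prop :=
  [/\ inL A u,
      ~ (exists v, [/\ v != 0, inL A v & supp v \proper supp u]) &
      (\big[gcdn/0%N]_(i < m) `|u i ord0|%N)%N = 1%N].

(* Main.v *)
Require Import Defs.
From mathcomp Require Import all_boot all_order all_algebra.
From mathcomp Require Import ring lra zify.
From Stdlib Require Import Classical_Prop.
Set Implicit Arguments. Unset Strict Implicit. Unset Printing Implicit Defensive.
Import Order.TTheory GRing.Theory Num.Theory.
Local Open Scope ring_scope.

Lemma clear_den k (z : 'rV[rat]_k) : exists (D : int) (w : 'cV[int]_k),
  D != 0 /\ map_mx (intr : int -> rat) w = D%:~R *: z^T.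
Proof.
exists (\prod_(t < k) denq (z 0 t)).
exists (\col_t (numq (z 0 t) * \prod_(s < k | s != t) denq (z 0 s))).
split.
  by rewrite prodf_seq_neq0; apply/allP => t _; rewrite denq_neq0.
apply/matrixP => i j; rewrite ord1 !mxE [in RHS](bigD1 i) //= !intrM numqE; ring.
Qed.

Lemma G1 n k (N : 'M[int]_(n,k)) : (forall w : 'cV[int]_k, N *m w = 0 -> w = 0) ->
  exists f : 'I_k -> 'I_n, injective f /\ \det (rowsub f N) != 0.
Proof.
move=> Hinj.
set Nq := map_mx (intr : int -> rat) N.
have rf : row_full Nq.
  have : row_free Nq^T.
    rewrite -kermx_eq0; apply/negPn/negP => Hk.
    set K := kermx Nq^T in Hk.
    have [[i j] /= Hij|H] := pickP (fun ij : 'I_k * 'I_k => K ij.1 ij.2 != 0); last first.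
      case/negP: Hk; apply/eqP/matrixP => i j.
      by rewrite [RHS]mxE; apply/eqP; move: (H (i, j)) => /= /negbFE.
    have Hz : row i K *m Nq^T = 0 by rewrite -row_mul mulmx_ker row0.
    clearbody K.
    have [D [w [HD Hw]]] := clear_den (row i K).
    have HNw : N *m w = 0.
      apply/matrixP => r c; apply/eqP; rewrite [X in _ == X]mxE -(intr_eq0 rat).
      have := congr1 (fun M => (D%:~R : rat) *: M) (congr1 trmx Hz).
      rewrite trmx_mul trmxK trmx0 scaler0 scalemxAr -Hw /Nq -map_mxM => /matrixP /(_ r c).
      by rewrite !mxE => ->.
    have := Hinj _ HNw => Hw0; move: Hw; rewrite Hw0 map_mx0 => /matrixP /(_ j 0).
    rewrite !mxE => /esym /eqP; rewrite mulf_eq0 intr_eq0 (negbTE HD) /=.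
    by rewrite (negbTE Hij).
  by rewrite /row_free mxrank_tr.
exists (fun i => fullrankfun rf i); split; first exact: fullrankfun_inj.
have := fullrowsub_unit rf; rewrite unitmxE unitfE.
have -> : rowsub (fullrankfun rf) Nq = map_mx intr (rowsub (fun i => fullrankfun rf i) N).
  by apply/matrixP => i j; rewrite !mxE.
by rewrite det_map_mx /= intr_eq0.
Qed.

Definition ext m (D : {set 'I_m}) (w : 'cV[int]_#|D|) : 'cV[int]_m :=
  \col_l \sum_(t < #|D|) ((enum_val t == l)%:R * w t 0).

Lemma ext_val m (D : {set 'I_m}) (w : 'cV[int]_#|D|) t : ext w (enum_val t) 0 = w t 0.
Proof.
rewrite /ext mxE (bigD1 t) //= eqxx mul1r big1 ?addr0 // => s Hs.
by rewrite (inj_eq enum_val_inj) (negbTE Hs) mul0r.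
Qed.

Lemma ext_out m (D : {set 'I_m}) (w : 'cV[int]_#|D|) l : l \notin D -> ext w l 0 = 0.
Proof.
move=> Hl; rewrite /ext mxE big1 // => t _.
case: eqP => [Ht|]; last by rewrite mul0r.
by move: Hl; rewrite -Ht enum_valP.
Qed.

Lemma mul_ext n m (A : 'M[int]_(n,m)) (D : {set 'I_m}) (w : 'cV[int]_#|D|) :
  A *m ext w = colsub (fun t : 'I_#|D| => enum_val t) A *m w.
Proof.
apply/matrixP => r c; rewrite ord1 !mxE.
under eq_bigr do rewrite /ext mxE big_distrr /=.
rewrite exchange_big /=; apply: eq_bigr => t _.
rewrite (bigD1 (enum_val t)) //= eqxx mul1r big1 ?addr0 ?mxE // => l Hl.
by rewrite eq_sym (negbTE Hl) mul0r mulr0.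
Qed.

Lemma vec_nz m k (w : 'M[int]_(m,k)) : w != 0 -> exists i j, w i j != 0.
Proof.
move=> Hw.
have [[i j] /= Hij|H] := pickP (fun ij : 'I_m * 'I_k => w ij.1 ij.2 != 0); last first.
  case/negP: Hw; apply/eqP/matrixP => i j.
  by rewrite [RHS]mxE; apply/eqP; move: (H (i, j)) => /= /negbFE.
by exists i, j.
Qed.

Definition minimal n m (A : 'M[int]_(n,m)) (u : 'cV[int]_m) :=
  ~ (exists v, [/\ v != 0, inL A v & supp v \proper supp u]).

Lemma Q n m (A : 'M[int]_(n,m)) (y : 'cV[int]_m) : totally_unimodular A ->
  inL A y -> minimal A y -> forall j0 i, y j0 0 != 0 -> y i 0 != 0 ->
  (y j0 ord0 %| y i ord0)%Z.
Proof.
move=> TU Hy Hmin j0 i Hj0 Hi.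
case: (eqVneq i j0) => [->|Hij]; first exact: dvdzz.
set D := [set l | (y l 0 != 0) && (l != j0)].
have HiD : i \in D by rewrite inE Hi Hij.
have Hj0D : j0 \notin D by rewrite inE eqxx andbF.
pose g := fun t : 'I_#|D| => enum_val t.
have ginj : injective g by apply: enum_val_inj.
set N := colsub g A.
have HN : forall w : 'cV[int]_#|D|, N *m w = 0 -> w = 0.
  move=> w Hw; apply/eqP; apply: contraT => Hw0; case: Hmin.
  exists (ext w); split.
  - have [t [c Htc]] := vec_nz Hw0; move: Htc; rewrite ord1 => Htc.
    apply/eqP => He; move: (ext_val w t); rewrite He mxE => Ht.
    by move: Htc; rewrite -Ht eqxx.
  - by rewrite /inL mul_ext.
  - apply/properP; split.
      apply/subsetP => l; rewrite !inE; apply: contraR => Hl.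
      rewrite ext_out //; by rewrite inE (negbTE Hl).
    by exists j0; rewrite !inE ?Hj0 // ext_out // eqxx.
have [f [finj Hdet]] := G1 HN.
set M := rowsub f N.
have HM : \det M = 1 \/ \det M = -1.
  have := TU _ f g finj ginj.
  have -> : mxsub f g A = M by apply/matrixP => r c; rewrite !mxE.
  by case => [H|H|H]; [move: Hdet; rewrite H eqxx | left | right].
pose Y : 'cV[int]_#|D| := \col_t y (g t) 0.
have Hext : ext Y = y - y j0 0 *: delta_mx j0 0.
  apply/matrixP => l c; rewrite ord1.
  case: (boolP (l \in D)) => HlD.
    have [t ->] : exists t, l = g t by exists (enum_rank_in HlD l); rewrite /g enum_rankK_in.
    rewrite ext_val !mxE.
    have : g t \in D by apply: enum_valP.
    by rewrite inE => /andP [_ /negbTE ->]; rewrite mulr0 subr0.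
  rewrite ext_out // !mxE.
  case: (eqVneq l j0) => [->|Hl]; first by rewrite !eqxx mulr1 subrr.
  move: HlD; rewrite inE Hl andbT negbK => /eqP ->.
  by rewrite mulr0 subr0.
have HMY : M *m Y = - (y j0 0) *: (\col_r A (f r) j0).
  have -> : M *m Y = rowsub f (N *m Y).
    by apply/matrixP => r c0; rewrite !mxE; apply: eq_bigr => t _; rewrite !mxE.
  rewrite -mul_ext Hext mulmxBr Hy -scalemxAr -colE sub0r.
  by apply/matrixP => r c0; rewrite ord1 !mxE mulNr.
have := congr1 (mulmx (\adj M)) HMY.
rewrite mulmxA mul_adj_mx mul_scalar_mx -scalemxAr => /matrixP /(_ (enum_rank_in HiD i) 0).
rewrite !mxE /g enum_rankK_in // => HE.
apply/dvdzP.
set X := \sum_j _ in HE.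
case: HM => HM; move: HE; rewrite HM.
  by rewrite mul1r => ->; exists (- X); rewrite !mulNr mulrC.
rewrite mulN1r => /(congr1 (fun x => - x)); rewrite opprK => ->.
by exists X; rewrite mulNr opprK mulrC.
Qed.

Lemma fin_argmin (I : finType) (P : pred I) (F : I -> rat) i0 : P i0 ->
  exists j, P j /\ forall i, P i -> F j <= F i.
Proof. by move=> Pi0; case: (arg_minP F Pi0) => j Pj Hj; exists j. Qed.

Lemma insupp m (x : 'cV[int]_m) i : (i \in supp x) = (x i 0 != 0).
Proof. by rewrite inE. Qed.

Lemma P n m (A : 'M[int]_(n,m)) (x : 'cV[int]_m) : x != 0 -> inL A x ->
  exists y, [/\ y != 0, inL A y, minimal A y &
    forall i, (y i 0 != 0 -> x i 0 != 0) /\ 0 <= y i 0 * x i 0].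
Proof.
have [k Hk] : exists k, (#|supp x| <= k)%N by eexists.
elim: k x Hk => [|k IH] x Hk Hx HL.
  have [i [c Hi]] := vec_nz Hx; move: Hi; rewrite ord1 => Hi.
  have : i \in supp x by rewrite insupp.
  by move: Hk; rewrite leqn0 cards_eq0 => /eqP ->; rewrite inE.
case: (classic (minimal A x)) => Hmx.
  exists x; split => // i; split => //.
  by rewrite -expr2 sqr_ge0.
have [w0 [Hw0 HLw0 Hpw0]] := NNPP _ Hmx.
have [i0 [c Hi0]] := vec_nz Hw0; move: Hi0; rewrite ord1 => Hi0.
have Hxi0 : x i0 0 != 0.
  by move: (proper_sub Hpw0) => /subsetP /(_ i0); rewrite !insupp; apply.
have [w [Hw HLw Hpw Hwi0]] : exists w : 'cV[int]_m,
    [/\ w != 0, inL A w, supp w \proper supp x & 0 < x i0 0 * w i0 0].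
  have Hne : x i0 0 * w0 i0 0 != 0 by rewrite mulf_neq0.
  case: (ltrgtP 0 (x i0 0 * w0 i0 0)) => H; first by exists w0.
    exists (- w0); split.
    - by rewrite oppr_eq0.
    - by rewrite /inL mulmxN HLw0 oppr0.
    - have -> : supp (- w0) = supp w0 by apply/setP => l; rewrite !inE mxE oppr_eq0.
      done.
    - by rewrite mxE mulrN oppr_gt0.
  by move: Hne; rewrite -H eqxx.
pose Pp := fun i => 0 < x i 0 * w i 0.
pose F := fun i => (`|x i 0|%:~R / `|w i 0|%:~R : rat).
have [j [Pj Hj]] := @fin_argmin _ Pp F i0 Hwi0.
pose z := (x j 0 * w j 0) *: x - (x j 0 * x j 0) *: w.
have zE : forall i, z i 0 = (x j 0 * w j 0) * x i 0 - (x j 0 * x j 0) * w i 0.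
  by move=> i; rewrite !mxE.
have Hsub : forall i, x i 0 = 0 -> w i 0 = 0.
  move=> i Hxi; move: (proper_sub Hpw) => /subsetP /(_ i); rewrite !insupp Hxi eqxx.
  by move=> H; apply/eqP; apply: contraT => /H.
have Hzsub : forall i, z i 0 != 0 -> x i 0 != 0.
  move=> i; rewrite zE; apply: contra => /eqP Hxi; by rewrite Hxi (Hsub _ Hxi) !mulr0 subr0.
have Hzj : z j 0 = 0 by rewrite zE; ring.
have Hxj : x j 0 != 0 by move: Pj; rewrite /Pp; apply: contraTneq => ->; rewrite mul0r ltxx.
have Hpz : supp z \proper supp x.
  apply/properP; split.
    by apply/subsetP => l; rewrite !insupp; apply: Hzsub.
  by exists j; rewrite !insupp ?Hxj // Hzj eqxx.
have Hz0 : z != 0.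
  move: (Hpw) => /properP [_ [l Hl Hl']]; move: Hl Hl'; rewrite !insupp negbK => Hl /eqP Hl'.
  apply/eqP => Hz; move: (zE l); rewrite Hz Hl' mulr0 subr0 mxE => /esym /eqP.
  by rewrite !mulf_eq0 (negbTE Hl) (negbTE Hxj) /= ?orbF => /eqP Hw'; move: Pj; rewrite /Pp Hw' mulr0 ltxx.
have HLz : inL A z by rewrite /inL mulmxBr -!scalemxAr HLw HL !scaler0 subr0.
have Hconf : forall i, 0 <= z i 0 * x i 0.
  move=> i; rewrite zE.
  have Hjp : 0 < x j 0 * w j 0 := Pj.
  case: (lerP (x i 0 * w i 0) 0) => Hi.
    have -> : (x j 0 * w j 0 * x i 0 - x j 0 * x j 0 * w i 0) * x i 0 =
      (x j 0 * w j 0) * (x i 0 * x i 0) + (x j 0 * x j 0) * (- (x i 0 * w i 0)) by ring.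
    apply: addr_ge0; apply: mulr_ge0.
    - exact: ltW.
    - by rewrite -expr2 sqr_ge0.
    - by rewrite -expr2 sqr_ge0.
    - by rewrite oppr_ge0.
  have := Hj i Hi; rewrite /F.
  have Hwj : 0 < `|w j 0| by rewrite normr_gt0; move: Hjp; apply: contraTneq => ->; rewrite mulr0 ltxx.
  have Hwi : 0 < `|w i 0| by rewrite normr_gt0; move: Hi; apply: contraTneq => ->; rewrite mulr0 ltxx.
  rewrite ler_pdivrMr ?ltr0z // mulrAC ler_pdivlMr ?ltr0z // -!intrM ler_int => Hle.
  have E1 : x j 0 * w j 0 = `|x j 0| * `|w j 0| by rewrite -normrM gtr0_norm.
  have E2 : x i 0 * w i 0 = `|x i 0| * `|w i 0| by rewrite -normrM gtr0_norm.
  have E3 : x i 0 * x i 0 = `|x i 0| * `|x i 0| by rewrite -normrM ger0_norm // -expr2 sqr_ge0.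
  have E4 : x j 0 * x j 0 = `|x j 0| * `|x j 0| by rewrite -normrM ger0_norm // -expr2 sqr_ge0.
  have -> : (x j 0 * w j 0 * x i 0 - x j 0 * x j 0 * w i 0) * x i 0 =
     (x j 0 * w j 0) * (x i 0 * x i 0) - (x j 0 * x j 0) * (x i 0 * w i 0) by ring.
  rewrite E1 E2 E3 E4.
  have -> : `|x j 0| * `|w j 0| * (`|x i 0| * `|x i 0|) - `|x j 0| * `|x j 0| * (`|x i 0| * `|w i 0|)
     = (`|x j 0| * `|x i 0|) * (`|w j 0| * `|x i 0| - `|x j 0| * `|w i 0|) by ring.
  apply: mulr_ge0; first by apply: mulr_ge0.
  by rewrite subr_ge0 [X in _ <= X]mulrC.
have Hcard : (#|supp z| <= k)%N.
  by move: (proper_card Hpz) => H; rewrite -ltnS; apply: leq_trans H Hk.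
have [y [Hy0 HLy Hmy Hyc]] := IH z Hcard Hz0 HLz.
exists y; split => // i; split.
  by move=> H; apply: Hzsub; case: (Hyc i) => /(_ H).
case: (eqVneq (y i 0) 0) => [->|Hyi]; first by rewrite mul0r.
case: (Hyc i) => /(_ Hyi) Hzi Hyz.
have Hzx := Hconf i.
have Hzz : 0 < z i 0 * z i 0.
  by rewrite lt_def mulf_neq0 //= -expr2 sqr_ge0.
rewrite -(pmulr_lge0 _ Hzz).
have -> : y i 0 * x i 0 * (z i 0 * z i 0) = (y i 0 * z i 0) * (z i 0 * x i 0) by ring.
exact: mulr_ge0.
Qed.

Lemma entry_split (v y : int) : (y != 0 -> v != 0) -> 0 <= y * v ->
  `|v|%N = (`|v - sgz y|%N + `|sgz y|%N)%N.
Proof.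
move=> H1 H2.
case: (ltrgtP 0 y) => Hy.
- rewrite gtr0_sgz //; have Hv : 0 < v.
    rewrite lt_def H1 ?(gt_eqF Hy) //=.
    by rewrite -(pmulr_rge0 _ Hy).
  lia.
- rewrite ltr0_sgz //; have Hv : v < 0.
    rewrite lt_def eq_sym H1 ?(lt_eqF Hy) //=.
    by rewrite -oppr_ge0 -(nmulr_rle0 _ Hy) mulrN oppr_le0.
  lia.
- by rewrite -Hy sgz0 subr0 addn0.
Qed.

Theorem mainTheorem5 (n m : nat) (A : 'M[int]_(n, m)) (lam : nat) :
  totally_unimodular A -> is_lambda A lam ->
  forall v : 'cV[int]_m, v != 0 -> inL A v -> (norm1 v < 2 * lam)%N ->
  circuit A v.
Proof.
move=> TU [_ Hlam] v Hv0 HLv Hnorm.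
have [y [Hy0 HLy Hmy Hyc]] := P Hv0 HLv.
have [j0 [c0 Hj0]] := vec_nz Hy0; move: Hj0; rewrite ord1 => Hj0.
pose d : int := `|y j0 0|.
have Hd0 : d != 0 by rewrite normr_eq0.
pose c : 'cV[int]_m := \col_i sgz (y i 0).
have HyE : y = d *: c.
  apply/matrixP => i k; rewrite ord1 !mxE.
  case: (eqVneq (y i 0) 0) => [->|Hyi]; first by rewrite sgz0 mulr0.
  have Habs : (`|y i ord0|%N = `|y j0 ord0|%N).
    by apply/eqP; rewrite eqn_dvd -!dvdzE !(Q TU HLy Hmy).
  rewrite {1}[y i 0]intEsg Habs /d mulrC; congr (_ * _).
have HLc : inL A c.
  move: HLy; rewrite /inL HyE -scalemxAr => /eqP; rewrite scalemx_eq0 (negbTE Hd0) /=.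
  by move/eqP.
have Hc0 : c != 0.
  apply/negP => /eqP Hc; move: Hy0; by rewrite HyE Hc scaler0 eqxx.
have Hsplit : norm1 v = (norm1 (v - c) + norm1 c)%N.
  rewrite /norm1 -big_split /=; apply: eq_bigr => i _; rewrite !mxE.
  by case: (Hyc i) => H1 H2; apply: entry_split.
have Hvc : v = c.
  apply/eqP; rewrite -subr_eq0; apply/negPn/negP => Hne.
  have H1 := Hlam _ Hne (ltac:(by rewrite /inL mulmxBr HLv HLc subrr)).
  have H2 := Hlam _ Hc0 HLc.
  by move: Hnorm; rewrite Hsplit ltnNge => /negP; apply; rewrite mul2n -addnn leq_add.
have Hsupp : supp v = supp y.
  by apply/setP => i; rewrite !inE Hvc mxE sgz_eq0.
split => //.
  by rewrite Hsupp.
rewrite (bigD1 j0) //= Hvc mxE.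
have -> : `|sgz (y j0 ord0)|%N = 1%N.
  by case: (ltrgtP 0 (y j0 0)) => H; [rewrite gtr0_sgz|rewrite ltr0_sgz|move: Hj0; rewrite -H eqxx].
by rewrite gcd1n.
Qed.
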